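(* Let $d,k\ge 0$ be integers. Then: (1) $f(k,d)\ge \frac{(k+1)(d+2t)}{(d+k+t+1)(d+t)}\ge \frac{k+1}{d+k+1}$, where $t$ is the unique integer with $1\le t\le k+1$ and $d\equiv k+1-t \pmod{k+1}$. (2) If $k\ge d$, then $f(k,d)\ge \frac{2k+2-d}{2k+2}$. Moreover, for $k\ge 1$, $f(k,1)=\frac{2k+1}{2k+2}$, attained by the graph $K_{1,k+1}\cup kK_1$ (a star with $k+1$ leaves together with $k$ isolated vertices). (3) For every finite simple graph $G$ on $n\ge 1$ vertices, $\alpha_k(G)\ge \frac{k+1}{\lceil d(G)\rceil+k+1}\,n$.
   Context: For a graph $G=(V,E)$ and an integer $k\ge 0$, a $k$-independent set is a set $S\subseteq V$ such that the induced subgraph $G[S]$ has maximum degree at most $k$; $\alpha_k(G)$ denotes the maximum cardinality of a $k$-independent set of $G$. $n(G)$ is the number of vertices and $d(G)=2|E(G)|/n(G)$ the average degree. For integers $d,k\ge 0$, $f(k,d)=\inf\left\{\frac{\alpha_k(G)}{n(G)} : G \text{ a finite simple graph with at least one vertex and } d(G)\le d\right\}$. *)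

(* Defs.v *)
From HB Require Import structures.
From mathcomp Require Import all_boot all_order all_algebra.
Set Implicit Arguments. Unset Strict Implicit. Unset Printing Implicit Defensive.
Import Order.TTheory GRing.Theory Num.Theory.

Definition simple_graph (T : finType) (e : rel T) : Prop :=
  symmetric e /\ irreflexive e.

Definition edges (T : finType) (e : rel T) : {set {set T}} :=
  [set [set p.1; p.2] | p in [set q : T * T | e q.1 q.2]].

Definition avgdeg (T : finType) (e : rel T) : rat :=
  ((2 * #|edges e|)%:R / #|T|%:R)%R.

Definition kindep (T : finType) (e : rel T) (k : nat) (S : {set T}) : bool :=
  [forall x in S, #|[set y in S | e x y]| <= k].

Definition alpha_k (T : finType) (e : rel T) (k : nat) : nat :=
  \max_(S : {set T} | kindep e k S) #|S|.

(* "f(k,d) >= c": c is a lower bound for alpha_k(G)/n(G) over all finite simple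
   graphs G with at least one vertex and d(G) <= d. *)
Definition f_ge (k d : nat) (c : rat) : Prop :=
  forall (T : finType) (e : rel T), simple_graph e -> (0 < #|T|)%N ->
    (avgdeg e <= d%:R)%R -> (c <= (alpha_k e k)%:R / #|T|%:R)%R.

(* The graph K_{1,k+1} U k K_1 on vertex set 'I_(2k+2): vertex 0 is the centre,
   vertices 1..k+1 are its leaves, vertices k+2..2k+1 are isolated. *)
Definition star_iso (k : nat) : rel 'I_(k.*2.+2) :=
  fun x y => ((val x == 0%N) && (1 <= val y <= k.+1)%N)
          || ((val y == 0%N) && (1 <= val x <= k.+1)%N).
Arguments star_iso k : clear implicits.

(* Main.v *)
Require Import Defs.
From HB Require Import structures.
From mathcomp Require Import all_boot all_order all_algebra.
From mathcomp Require Import zify.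
Import Order.TTheory GRing.Theory Num.Theory.
Set Implicit Arguments. Unset Strict Implicit. Unset Printing Implicit Defensive.

Definition nb (T : finType) (e : rel T) (U : {set T}) (x : T) : {set T} :=
  [set y in U | e x y].
Definition sdeg (T : finType) (e : rel T) (U : {set T}) : nat :=
  \sum_(x in U) #|nb e U x|.

Lemma sum_bool_card (T : finType) (A : {pred T}) (b : pred T) :
  \sum_(x in A) (b x : nat) = #|[set x in A | b x]|.
Proof.
rewrite -sum1_card big_mkcond /= [RHS]big_mkcond /=.
apply: eq_bigr => x _; rewrite !inE; by case: (x \in A); case: (b x).
Qed.

Lemma sdeg_del (T : finType) (e : rel T) (U : {set T}) (v : T) :
  simple_graph e -> v \in U -> sdeg e U = sdeg e (U :\ v) + 2 * #|nb e U v|.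
Proof.
move=> [sy ir] vU; rewrite /sdeg (bigD1 v) //=.
have -> : \sum_(x in U | x != v) #|nb e U x|
        = \sum_(x in U :\ v) (#|nb e (U :\ v) x| + e x v).
  rewrite [RHS](eq_bigl (fun x => (x \in U) && (x != v))); last first.
    by move=> x; rewrite !inE andbC.
  apply: eq_bigr => x /andP [xU xv].
  rewrite (cardsD1 v) addnC; congr (_ + _); last by rewrite !inE vU.
  by apply: eq_card => y; rewrite !inE andbA.
rewrite big_split /= sum_bool_card.
have -> : [set x in U :\ v | e x v] = nb e U v.
  apply/setP => y; rewrite !inE sy; case E: (e v y); rewrite ?andbF // ?andbT.
  by case: eqP => // Hy; rewrite Hy ir in E.
lia.
Qed.


Definition own (T : finType) (e : rel T) (U : {set T}) p (f : {ffun T -> 'I_p}) x :=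
  #|[set y in U | e x y && (f y == f x)]|.
Definition cost (T : finType) (e : rel T) (U : {set T}) p (f : {ffun T -> 'I_p}) :=
  \sum_(x in U) own e U f x.

Lemma cost_split (T : finType) (e : rel T) (U : {set T}) p (f : {ffun T -> 'I_p}) x :
  simple_graph e -> x \in U ->
  cost e U f = 2 * own e U f x
     + \sum_(z in U :\ x) #|[set y in U :\ x | e z y && (f y == f z)]|.
Proof.
move=> [sy ir] xU; rewrite /cost (bigD1 x) //=.
have -> : \sum_(z in U | z != x) own e U f z
        = \sum_(z in U :\ x) (#|[set y in U :\ x | e z y && (f y == f z)]|
                              + (e z x && (f x == f z))).
  rewrite [RHS](eq_bigl (fun z => (z \in U) && (z != x))); last first.
    by move=> z; rewrite !inE andbC.
  apply: eq_bigr => z /andP [zU zx].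
  rewrite /own (cardsD1 x) addnC; congr (_ + _); last by rewrite !inE xU.
  by apply: eq_card => y; rewrite !inE andbA.
rewrite big_split /= sum_bool_card.
have -> : [set z in U :\ x | e z x && (f x == f z)] =
          [set y in U | e x y && (f y == f x)].
  apply/setP => y; rewrite !inE sy eq_sym; case E: (e x y); rewrite ?andbF //=.
  rewrite [f y == _]eq_sym; case: eqP => [Hy|] //=; by rewrite Hy ir in E.
rewrite /own; lia.
Qed.

Lemma sum_classes (T : finType) (A : {set T}) p (f : T -> 'I_p) :
  \sum_(j : 'I_p) #|[set y in A | f y == j]| = #|A|.
Proof.
rewrite -sum1_card (partition_big f xpredT) //=.
apply: eq_bigr => j _; rewrite -sum1_card; apply: eq_bigl => y; by rewrite !inE.
Qed.

Lemma pigeon_lo p (F : 'I_p.+1 -> nat) N :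
  \sum_j F j = N -> exists j, p.+1 * F j <= N.
Proof.
move=> HS; have [/existsP [j Hj]|/existsPn H] := boolP [exists j, p.+1 * F j <= N]; first by exists j.
exfalso; have : \sum_(j : 'I_p.+1) N.+1 <= \sum_j p.+1 * F j.
  apply: leq_sum => j _; move: (H j); rewrite -ltnNge; lia.
rewrite sum_nat_const card_ord -big_distrr /= HS; lia.
Qed.

Lemma pigeon_hi p (F : 'I_p.+1 -> nat) N :
  \sum_j F j = N -> exists j, N <= p.+1 * F j.
Proof.
move=> HS; have [/existsP [j Hj]|/existsPn H] := boolP [exists j, N <= p.+1 * F j]; first by exists j.
exfalso; have : \sum_j (p.+1 * F j).+1 <= \sum_(j : 'I_p.+1) N.
  apply: leq_sum => j _; move: (H j); rewrite -ltnNge; lia.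
rewrite sum_nat_const card_ord; under eq_bigr do rewrite -addn1; rewrite big_split /= -big_distrr /= HS sum_nat_const card_ord; lia.
Qed.

Lemma partition_lemma (T : finType) (e : rel T) (U : {set T}) p k :
  simple_graph e -> (forall x, x \in U -> #|nb e U x| < p.+1 * k.+1) ->
  exists S, kindep e k S /\ #|U| <= p.+1 * #|S|.
Proof.
move=> sg Hdeg.
pose f0 := [ffun _ : T => (ord0 : 'I_p.+1)].
case: (@arg_minnP _ f0 xpredT (@cost _ e U p.+1) isT) => f _ fmin.
have key : forall x, x \in U -> p.+1 * own e U f x <= #|nb e U x|.
  move=> x xU; rewrite leqNgt; apply/negP => Hlt.
  have Hs := sum_classes (nb e U x) f.
  case: (pigeon_lo Hs) => j Hj.
  pose f' := [ffun z => if z == x then j else f z].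
  have := fmin f' isT.
  rewrite (cost_split f sg xU) (cost_split f' sg xU).
  have -> : \sum_(z in U :\ x) #|[set y in U :\ x | e z y && (f' y == f' z)]|
          = \sum_(z in U :\ x) #|[set y in U :\ x | e z y && (f y == f z)]|.
    apply: eq_bigr => z; rewrite !inE => /andP [zx _].
    apply: eq_card => y; rewrite !inE !ffunE (negbTE zx).
    by case: (y == x).
  have -> : own e U f' x = #|[set y in nb e U x | f y == j]|.
    apply: eq_card => y; rewrite !inE !ffunE eqxx.
    case: (eqVneq y x) => [->|yx]; last by rewrite andbA.
    by case: sg => _ ir; rewrite ir !andbF.
  move: Hj Hlt; set a := #|[set y in nb e U x | f y == j]|.
  set b := own e U f x; set c := #|nb e U x| => H1 H2.
  have : a < b by rewrite -(ltn_pmul2l (ltn0Sn p)); apply: leq_ltn_trans H2.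
  move=> Hab; rewrite leq_add2r; lia.
have Hs := sum_classes U f.
case: (pigeon_hi Hs) => j Hj.
exists [set y in U | f y == j]; split => //.
apply/forallP => x; apply/implyP; rewrite inE => /andP [xU /eqP fx].
have -> : #|[set y in [set y0 in U | f y0 == j] | e x y]| = own e U f x.
  apply: eq_card => y; rewrite !inE fx; by case: (y \in U); case: (f y == j); case: (e x y).
have := key x xU; have := Hdeg x xU; nia.
Qed.


Lemma ML (T : finType) (e : rel T) k : simple_graph e ->
  forall q (U : {set T}), exists S, kindep e k S /\
    2 * k.+1 * q.+1 * #|U| <= k.+1 * q.+1 * q.+2 * #|S| + sdeg e U.
Proof.
move=> sg.
suff H : forall n (U : {set T}), #|U| <= n -> forall q, exists S, kindep e k S /\
    2 * k.+1 * q.+1 * #|U| <= k.+1 * q.+1 * q.+2 * #|S| + sdeg e U.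
  by move=> q U; exact: H _ U (leqnn _) q.
elim=> [|n IHn] U HU q.
  exists set0; split.
    by apply/forallP => x; rewrite inE.
  by move: HU; rewrite leqn0 => /eqP ->; rewrite muln0.
have Hdel : forall q, [exists v in U, q.+1 * k.+1 <= #|nb e U v|] -> exists S, kindep e k S /\
    2 * k.+1 * q.+1 * #|U| <= k.+1 * q.+1 * q.+2 * #|S| + sdeg e U.
  move=> q0 /existsP [v /andP [vU Hv]].
  have HU' : #|U :\ v| <= n by move: HU; rewrite (cardsD1 v U) vU.
  case: (IHn _ HU' q0) => S [HS Hb]; exists S; split => //.
  rewrite (sdeg_del sg vU) (cardsD1 v U) vU add1n mulnS.
  move: Hb Hv; set A := 2 * k.+1 * q0.+1; set c := k.+1 * q0.+1 * q0.+2.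
  set N := #|U :\ v|; set D := sdeg e (U :\ v); set d := #|nb e U v|.
  rewrite /A; nia.
elim: q => [|q IHq].
  case: (boolP [exists v in U, 0.+1 * k.+1 <= #|nb e U v|]) => [/Hdel //|/existsPn Hn].
  exists U; split.
    apply/forallP => x; apply/implyP => xU.
    by move: (Hn x); rewrite xU /= mul1n -ltnNge ltnS.
  nia.
case: (boolP [exists v in U, q.+2 * k.+1 <= #|nb e U v|]) => [/Hdel //|/existsPn Hn].
have Hlt : forall x, x \in U -> #|nb e U x| < q.+2 * k.+1.
  by move=> x xU; move: (Hn x); rewrite xU /= -ltnNge.
case: (leqP (q.+1 * k.+1 * #|U|) (sdeg e U)) => HD.
  case: (@partition_lemma _ e U q.+1 k sg Hlt) => S [HS HSc]; exists S; split => //.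
  have := leq_mul (leqnn (k.+1 * q.+3)) HSc.
  move: HD; set N := #|U|; set s := #|S|; set D := sdeg e U; nia.
case: IHq => S [HS Hb]; exists S; split => //.
have H3 := leq_mul (leqnn q.+3) Hb.
rewrite -(leq_pmul2l (ltn0Sn q)).
move: HD H3; set N := #|U|; set s := #|S|; set D := sdeg e U; nia.
Qed.


Lemma pair_fibre (T : finType) (x y a b : T) :
  [set x; y] = [set a; b] -> ((x, y) == (a, b)) || ((x, y) == (b, a)).
Proof.
move=> E.
have hx : x \in [set a; b] by rewrite -E !inE eqxx.
have hy : y \in [set a; b] by rewrite -E !inE eqxx orbT.
have ha : a \in [set x; y] by rewrite E !inE eqxx.
have hb : b \in [set x; y] by rewrite E !inE eqxx orbT.
move: hx hy ha hb; rewrite !inE.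
case/orP=> /eqP -> ; case/orP=> /eqP ->; rewrite ?eqxx ?orbT //= ?orbb.
  by move=> _ /eqP ->; rewrite eqxx.
by move=> /eqP -> _; rewrite eqxx.
Qed.

Lemma handshake_le (T : finType) (e : rel T) :
  sdeg e setT <= 2 * #|edges e|.
Proof.
pose P := [set q : T * T | e q.1 q.2].
have -> : sdeg e setT = #|P|.
  rewrite /sdeg.
  have -> : \sum_(x in setT) #|nb e setT x| = \sum_x \sum_y (e x y : nat).
    apply: eq_big => [x|x _]; first by rewrite inE.
    rewrite sum_bool_card; apply: eq_card => y; by rewrite !inE.
  rewrite pair_big /= sum_bool_card; apply: eq_card => q; by rewrite !inE.
rewrite -sum1_card (partition_big_imset (fun q => [set q.1; q.2])) /=.
rewrite /edges mulnC -sum_nat_const.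
apply: leq_sum => E /imsetP [q0 q0P ->].
rewrite sum1_card.
apply: (@leq_trans #|[set (q0.1, q0.2); (q0.2, q0.1)]|); last first.
  by rewrite cards2; case: (_ != _).
apply: subset_leq_card; apply/subsetP => q; rewrite !inE => /andP [_ /eqP Hq].
by have := pair_fibre Hq; case: q {Hq}.
Qed.

Local Open Scope ring_scope.

Lemma fge_ab k d q a b : (a + d = 2 * k.+1 * q.+1)%N -> b = (k.+1 * q.+1 * q.+2)%N ->
  f_ge k d (a%:R / b%:R).
Proof.
move=> Ha Hb T e sg n0 Hav.
case: (ML k sg q setT) => S [HS HB].
have HSa : (#|S| <= alpha_k e k)%N by rewrite /alpha_k; apply: (@leq_bigmax_cond _ (fun S => kindep e k S) (fun S => #|S|) S HS).
have Hn : (0 : rat) < #|T|%:R by rewrite ltr0n.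
have Hb0 : (0 : rat) < b%:R by rewrite Hb ltr0n muln_gt0.
move: Hav; rewrite /avgdeg ler_pdivrMr // -natrM ler_nat => Hav.
have Hd := handshake_le e.
rewrite cardsT in HB.
rewrite ler_pdivlMr // mulrAC ler_pdivrMr // -!natrM ler_nat.
move: HSa HB Hd Hav; rewrite -Hb.
set N := #|T|; set s := #|S|; set al := alpha_k e k; set D := sdeg e setT;
set E := #|edges e|; nia.
Qed.

Lemma fge_eq k d c c' : f_ge k d c -> c' = c -> f_ge k d c'.
Proof. by move=> H ->. Qed.

Lemma part1 d k t : (1 <= t <= k.+1)%N -> d = (k.+1 - t)%N %[mod k.+1] ->
     f_ge k d ((k.+1 * (d + 2 * t))%:R / ((d + k + t + 1) * (d + t))%:R)
     /\ (k.+1)%:R / (d + k + 1)%:R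
          <= (k.+1 * (d + 2 * t))%:R / ((d + k + t + 1) * (d + t))%:R :> rat.
Proof.
move=> /andP [t1 tk] Hm.
have Hmod : ((d + t) %% k.+1 = 0)%N.
  by rewrite -modnDml Hm modnDml subnK // modnn.
have Hr : (d + t = ((d + t) %/ k.+1) * k.+1)%N.
  by rewrite {1}(divn_eq (d + t) k.+1) Hmod addn0.
move: Hr; set r := ((d + t) %/ k.+1)%N => Hr.
have r0 : (0 < r)%N by move: Hr; case: (r) => //= ; lia.
have Hf := @fge_ab k d r.-1 (d + 2 * t) (k.+1 * r * r.+1) ltac:(rewrite prednK //; lia) ltac:(rewrite prednK //).
split.
  apply: (fge_eq Hf); apply/eqP; rewrite eqr_div ?pnatr_eq0 -?natrM ?eqr_nat.
  - have E1 : (d + k + t + 1 = r.+1 * k.+1)%N by rewrite mulSn; lia.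
    rewrite E1 Hr; apply/eqP; lia.
  - by rewrite muln_eq0; apply/norP; split; lia.
  - by rewrite -lt0n !muln_gt0 r0.
rewrite ler_pdivrMr ?ltr0n; last by rewrite ?muln_gt0; lia.
rewrite mulrAC ler_pdivlMr ?ltr0n; last lia.
rewrite -!natrM ler_nat -mulnA leq_pmul2l //.
have : (t * (d + t) <= t * (d + k + 1))%N by apply: leq_mul => //; lia.
nia.
Qed.

Local Close Scope ring_scope.

Lemma star_simple k : simple_graph (star_iso k).
Proof.
split; first by move=> x y; rewrite /star_iso orbC.
move=> x; rewrite /star_iso orbb; case: eqP => [->|] //.
Qed.

Definition leaf k (i : 'I_k.+1) : 'I_(k.*2.+2) := inord i.+1.

Lemma leaf_val k (i : 'I_k.+1) : val (leaf i) = i.+1.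
Proof. rewrite /leaf /= inordK //; have := ltn_ord i; lia. Qed.

Lemma leaf_inj k : injective (@leaf k).
Proof. move=> i j /(congr1 val); rewrite !leaf_val => -[] H; exact: val_inj. Qed.

Lemma star_edges k : (#|edges (star_iso k)| <= k.+1)%N.
Proof.
apply: (@leq_trans #|[set [set ord0; leaf i] | i : 'I_k.+1]|); last first.
  by rewrite -[X in (_ <= X)%N](card_ord k.+1) leq_imset_card.
apply: subset_leq_card; apply/subsetP => E /imsetP [[x y] /=].
rewrite inE /= /star_iso => /orP [] /andP [/eqP x0 Hy] ->.
  move: Hy => /andP [Hy1 Hy2]; move: x0 Hy1 Hy2 => /= x0 Hy1 Hy2.
  have Hy' : (y - 1 < k.+1)%N by lia.
  apply/imsetP; exists (Ordinal Hy') => //=.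
  congr [set _; _]; apply: val_inj => //=; rewrite leaf_val /=; lia.
move: Hy => /andP [Hy1 Hy2]; move: x0 Hy1 Hy2 => /= x0 Hy1 Hy2; have Hx' : (x - 1 < k.+1)%N by lia.
apply/imsetP; exists (Ordinal Hx') => //=.
rewrite setUC; congr [set _; _]; apply: val_inj => //=; rewrite leaf_val /=; lia.
Qed.

Local Open Scope ring_scope.

Lemma star_avg k : avgdeg (star_iso k) <= 1.
Proof.
rewrite /avgdeg ler_pdivrMr ?ltr0n ?card_ord // mul1r ler_nat.
have := star_edges k; lia.
Qed.

Lemma star_alpha k : alpha_k (star_iso k) k = k.*2.+1.
Proof.
apply/eqP; rewrite eqn_leq; apply/andP; split.
  apply/bigmax_leqP => S HS.
  have : (#|S| <= #|'I_(k.*2.+2)|)%N by apply: max_card.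
  rewrite card_ord leq_eqVlt => /orP [/eqP HSc|//].
  have ST : S = setT by apply/eqP; rewrite eqEcard subsetT /= cardsT card_ord HSc.
  move/forallP: HS => /(_ ord0); rewrite ST inE /=.
  have : (k.+1 <= #|[set y in [set: 'I_(k.*2.+2)] | star_iso k ord0 y]|)%N.
    rewrite -{1}(card_ord k.+1) -(card_imset _ (@leaf_inj k)).
    apply: subset_leq_card; apply/subsetP => y /imsetP [i _ ->].
    rewrite !inE /star_iso /= leaf_val; have := ltn_ord i; lia.
  by move=> H1 H2; have := leq_trans H1 H2; rewrite ltnn.
pose S0 := [set x : 'I_(k.*2.+2) | x != ord0].
apply: (@leq_trans #|S0|).
  have -> : S0 = [set~ ord0] by apply/setP => x; rewrite !inE.
  by rewrite cardsC1 card_ord.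
apply: (@leq_bigmax_cond _ (fun S => kindep (star_iso k) k S) (fun S => #|S|) S0).
apply/forallP => x; apply/implyP; rewrite inE => x0.
rewrite (_ : [set y in S0 | star_iso k x y] = set0) ?cards0 //.
apply/setP => y; rewrite !inE /star_iso.
case: (eqVneq y ord0) => [->|y0] /=; first by [].
have -> : (val x == 0%N) = false by apply/negbTE; apply: contra x0 => /eqP H; apply/eqP; apply: val_inj.
have -> : (val y == 0%N) = false by apply/negbTE; apply: contra y0 => /eqP H; apply/eqP; apply: val_inj.
by [].
Qed.

Local Close Scope ring_scope.
Unset Implicit Arguments.
Local Open Scope ring_scope.

Theorem mainTheorem7 (d k : nat) :
  (* (1) *)
  (forall t : nat, (1 <= t <= k.+1)%N -> d = (k.+1 - t)%N %[mod k.+1] ->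
     f_ge k d ((k.+1 * (d + 2 * t))%:R / ((d + k + t + 1) * (d + t))%:R)
     /\ (k.+1)%:R / (d + k + 1)%:R
          <= (k.+1 * (d + 2 * t))%:R / ((d + k + t + 1) * (d + t))%:R :> rat)
  (* (2) *)
  /\ ((d <= k)%N -> f_ge k d ((k.*2.+2 - d)%:R / (k.*2.+2)%:R))
  /\ ((1 <= k)%N ->
        f_ge k 1 ((k.*2.+1)%:R / (k.*2.+2)%:R)
        /\ simple_graph (star_iso k)
        /\ avgdeg (star_iso k) <= 1
        /\ (alpha_k (star_iso k) k)%:R / #|'I_(k.*2.+2)|%:R
             = (k.*2.+1)%:R / (k.*2.+2)%:R :> rat)
  (* (3) *)
  /\ (forall (T : finType) (e : rel T), simple_graph e -> (0 < #|T|)%N ->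
        (k.+1)%:R / ((Num.ceil (avgdeg e))%:~R + (k.+1)%:R) * #|T|%:R
          <= (alpha_k e k)%:R :> rat).
Proof.
split; first by move=> t; exact: part1.
split.
  move=> dk; apply: (@fge_ab k d 0 (k.*2.+2 - d) (k.*2.+2)); lia.
split.
  move=> k1; split; first by apply: (@fge_ab k 1 0 (k.*2.+1) (k.*2.+2)); lia.
  split; first exact: star_simple.
  split; first exact: star_avg.
  by rewrite star_alpha card_ord.
move=> T e sg n0.
have a0 : 0 <= avgdeg e by rewrite /avgdeg divr_ge0 ?ler0n.
have [Dn HD] : exists Dn : nat, Num.ceil (avgdeg e) = Dn%:Z.
  exists `|Num.ceil (avgdeg e)|%N; rewrite gez0_abs // ceil_ge0.
  by apply: lt_le_trans a0; rewrite ltrN10.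
have Hav : avgdeg e <= Dn%:R.
  have := ceil_ge (avgdeg e); by rewrite HD.
set t := (k.+1 - Dn %% k.+1)%N.
have Ht : (1 <= t <= k.+1)%N by apply/andP; split; have := ltn_pmod Dn (ltn0Sn k); lia.
have Hm : Dn = (k.+1 - t)%N %[mod k.+1].
  rewrite /t subKn ?modn_mod //; apply: ltnW; exact: ltn_pmod.
case: (part1 Ht Hm) => Hf Hle.
have := Hf T e sg n0 Hav.
rewrite HD.
have -> : (Dn%:Z)%:~R = (Dn%:R : rat) by [].
move=> Hc.
have Hn : (0 : rat) < #|T|%:R by rewrite ltr0n.
rewrite -ler_pdivlMr // -natrD.
apply: le_trans Hc; move: Hle.
by rewrite -addnA addn1.
Qed.
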